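(* Let $x_1,\dots,x_n\in\mathbb{R}^p$, let $u_1,\dots,u_s$ be points chosen from $\{x_1,\dots,x_n\}$, and let $k$ be a nonnegative base kernel such that all normalizing sums below are positive. For $1\le j\le s$ let $n_j$ be the number of $x_i$ whose nearest induced point is $u_j$. Define for $1\le i\le n$, $1\le j\le s$: $$A_{ij}=\frac{n_jk(x_i,u_j)}{\sum_{q=1}^nk(x_q,u_j)\sum_{q=1}^sn_qk(x_i,u_q)},\qquad Z_{ij}=\frac{A_{ij}}{\sum_{l=1}^sA_{il}},$$ let $\Lambda$ be the $s\times s$ diagonal matrix with $\Lambda_{jj}=\sum_{i=1}^nZ_{ij}$, and $L=I-(Z\Lambda^{-1}Z^\top)^{1/2}$ (with the positive semidefinite square root). Then the eigenvalues of $L$ are real and lie in $[0,1]$; in particular $0$ is the smallest eigenvalue of $L$. *)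

(* Defs.v *)
From HB Require Import structures.
From mathcomp Require Import all_boot all_order all_algebra.
From mathcomp Require Import reals.
From mathcomp Require Export complex.
Set Implicit Arguments. Unset Strict Implicit. Unset Printing Implicit Defensive.
Import Order.TTheory GRing.Theory Num.Theory.
Local Open Scope ring_scope.

Section Defs.
Variables (R : realType) (n p s : nat).
Variables (x : 'I_n -> 'rV[R]_p) (c : 'I_s -> 'I_n) (k : 'rV[R]_p -> 'rV[R]_p -> R).

Definition edist (a b : 'rV[R]_p) : R := Num.sqrt (\sum_(t < p) (a 0 t - b 0 t) ^+ 2).

Definition ind (j : 'I_s) : 'rV[R]_p := x (c j).

(* u_j is the nearest induced point of x_i (ties broken by smallest index j) *)
Definition is_nearest (i : 'I_n) (j : 'I_s) : bool :=
  [forall l : 'I_s, edist (x i) (ind j) <= edist (x i) (ind l)] &&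
  [forall l : 'I_s, (l < j)%N ==> (edist (x i) (ind j) < edist (x i) (ind l))].

Definition ncount (j : 'I_s) : nat := #|[set i | is_nearest i j]|.

Definition Amx : 'M[R]_(n, s) := \matrix_(i, j)
  ((ncount j)%:R * k (x i) (ind j) /
   ((\sum_(q < n) k (x q) (ind j)) * (\sum_(q < s) (ncount q)%:R * k (x i) (ind q)))).

Definition Zmx : 'M[R]_(n, s) := \matrix_(i, j) (Amx i j / \sum_(l < s) Amx i l).

Definition Lam : 'M[R]_s := diag_mx (\row_j \sum_(i < n) Zmx i j).

Definition Mmx : 'M[R]_n := Zmx *m invmx Lam *m Zmx^T.
End Defs.

Definition psd_sqrt (R : realType) (m : nat) (M S : 'M[R]_m) : Prop :=
  S^T = S /\ (forall v : 'cV[R]_m, 0 <= (v^T *m S *m v) 0 0) /\ S *m S = M.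

(* Main.v *)
Require Import Defs.
From HB Require Import structures.
From mathcomp Require Import all_boot all_order all_algebra.
From mathcomp Require Import reals complex.
From mathcomp Require Import lra.
Import Order.TTheory GRing.Theory Num.Theory.
Local Open Scope ring_scope.
Set Implicit Arguments. Unset Strict Implicit. Unset Printing Implicit Defensive.

Lemma sym_diag (R : rcfType) n (A : 'M[R]_n) : A^T = A ->
  exists2 P : 'M[R]_n, P \in unitmx & exists d, P *m A = diag_mx d *m P.
Proof.
move=> Asym.
pose AC := map_mx (real_complex R) A.
have ACsym : AC \is symmetricmx.
  by apply/is_hermitianmxP; rewrite expr0 scale1r map_mx_id // /AC map_trmx Asym.
have ACreal : AC \is a realmx.
  by apply/mxOverP => i j; rewrite mxE; apply/complex_realP; eexists.
have /hermitian_normalmx /orthomx_spectralP AE := realsym_hermsym ACsym ACreal.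
have spr := hermitian_spectral_diag_real (realsym_hermsym ACsym ACreal).
have Uu := spectral_unit AC.
have : similar_in unitmx AC (diag_mx (spectral_diag AC)).
  exists (spectralmx AC) => //; apply/similarP => //.
  by rewrite [X in _ *m X = _]AE !mulmxA mulmxV // mul1mx.
move=> /real_similar /(_ ACreal) [].
  by apply/mxOverP => i j; rewrite mxE; case: eqP => _; rewrite ?mulr1n ?mulr0n ?(mxOverP spr) ?real0.
move=> Q /andP [Qr Qu] /(similarP Qu) QE.
pose Qr' := map_mx (@complex.Re R) Q.
have QrE : map_mx (real_complex R) Qr' = Q.
  by apply/matrixP => i j; rewrite !mxE RRe_real // (mxOverP Qr).
pose d := map_mx (@complex.Re R) (spectral_diag AC).
have dE : map_mx (real_complex R) d = spectral_diag AC.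
  by apply/matrixP => i j; rewrite !mxE RRe_real // (mxOverP spr).
exists Qr'; first by rewrite -(map_unitmx (real_complex R)) QrE.
exists d.
have : map_mx (real_complex R) (Qr' *m A) = map_mx (real_complex R) (diag_mx d *m Qr').
  by rewrite !map_mxM map_diag_mx dE QrE.
by move/matrixP => H; apply/matrixP => i j; have := H i j; rewrite !mxE => /complexI.
Qed.
Lemma fc_unique (R : fieldType) n (g : R -> R) (P Q : 'M[R]_n) d d' :
  P \in unitmx -> Q \in unitmx ->
  invmx P *m diag_mx d *m P = invmx Q *m diag_mx d' *m Q ->
  invmx P *m diag_mx (map_mx g d) *m P = invmx Q *m diag_mx (map_mx g d') *m Q.
Proof.
move=> Pu Qu H.
pose X := Q *m invmx P.
have HX : X *m diag_mx d = diag_mx d' *m X.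
  have := congr1 (fun Y => Q *m Y *m invmx P) H.
  rewrite /X !mulmxA mulmxV // mul1mx -[_ *m P *m invmx P]mulmxA mulmxV // mulmx1.
  by rewrite -[diag_mx d' *m Q *m _]mulmxA.
have key : forall Y : 'M_n, Y *m diag_mx d = diag_mx d' *m Y ->
    Y *m diag_mx (map_mx g d) = diag_mx (map_mx g d') *m Y.
  move=> Y HY; apply/matrixP => i j; move/matrixP: HY => /(_ i j).
  rewrite !mul_mx_diag !mul_diag_mx !mxE => Hij.
  case: (eqVneq (Y i j) 0) => [->|nz]; first by rewrite mul0r mulr0.
  have -> : d 0 j = d' 0 i by apply: (mulfI nz); rewrite Hij mulrC.
  by rewrite mulrC.
have HXg := key X HX.
have := congr1 (fun Y => invmx Q *m Y *m P) HXg.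
rewrite /X !mulmxA mulVmx // mul1mx => ->.
by rewrite -mulmxA mulVmx // mulmx1.
Qed.

Section Real.
Variable R : rcfType.

Lemma row_eig n (P A : 'M[R]_n) d j : P *m A = diag_mx d *m P ->
  row j P *m A = d 0 j *: row j P.
Proof. by move=> H; rewrite -row_mul H mul_diag_mx; apply/rowP => k; rewrite !mxE. Qed.

Lemma unit_row_neq0 n (P : 'M[R]_n) j : P \in unitmx -> row j P != 0.
Proof.
move=> Pu; apply/negP => /eqP H0.
have := congr1 (fun X => X *m invmx P) H0.
rewrite -row_mul mulmxV // mul0mx => /rowP /(_ j); rewrite !mxE eqxx /= => /eqP.
by rewrite oner_eq0.
Qed.

Lemma norm_ge0 n (u : 'rV[R]_n) : 0 <= (u *m u^T) 0 0.
Proof. by rewrite mxE; apply: sumr_ge0 => i _; rewrite mxE -expr2 sqr_ge0. Qed.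

Lemma norm_gt0 n (u : 'rV[R]_n) : u != 0 -> 0 < (u *m u^T) 0 0.
Proof.
move=> unz; have [i ui] : exists i, u 0 i != 0.
  apply/existsP; apply: contraNT unz; rewrite negb_exists => /forallP H.
  by apply/eqP/rowP => i; rewrite mxE; apply/eqP; move: (H i); rewrite negbK.
rewrite mxE (bigD1 i) //= mxE -expr2.
apply: (lt_le_trans (y := u 0 i ^+ 2)); first by rewrite exprn_even_gt0.
rewrite lerDl; apply: sumr_ge0 => l _; rewrite mxE -expr2 sqr_ge0 //.
Qed.

Lemma cv_form n (A : 'M[R]_n) (u : 'rV[R]_n) :
  ((u^T)^T *m A *m u^T) 0 0 = (u *m A *m u^T) 0 0.
Proof. by rewrite trmxK. Qed.

Lemma eig_form n (A : 'M[R]_n) (u : 'rV[R]_n) e : u *m A = e *: u ->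
  (u *m A *m u^T) 0 0 = e * (u *m u^T) 0 0.
Proof. by move=> ->; rewrite -scalemxAl mxE. Qed.

Lemma conj_mul n (P : 'M[R]_n) a b : P \in unitmx ->
  (invmx P *m diag_mx a *m P) *m (invmx P *m diag_mx b *m P) =
  invmx P *m diag_mx (\row_j (a 0 j * b 0 j)) *m P.
Proof.
by move=> Pu; rewrite !mulmxA mulmxK // -mulmx_diag !mulmxA.
Qed.

Lemma sqrt_ex n (A : 'M[R]_n) : A^T = A ->
  (forall v : 'cV_n, 0 <= (v^T *m A *m v) 0 0) ->
  exists S : 'M[R]_n, [/\ S^T = S, (forall v : 'cV_n, 0 <= (v^T *m S *m v) 0 0) & S *m S = A].
Proof.
move=> Asym Apsd.
have [P Pu [d dP]] := sym_diag Asym.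
have AE : A = invmx P *m diag_mx d *m P by rewrite -mulmxA -dP mulKmx.
have d0 : forall j, 0 <= d 0 j.
  move=> j; have := Apsd (row j P)^T.
  rewrite cv_form (eig_form (row_eig j dP)).
  by rewrite pmulr_lge0 // norm_gt0 // unit_row_neq0.
pose f4 := fun t : R => Num.sqrt (Num.sqrt t).
pose Rm := invmx P *m diag_mx (map_mx f4 d) *m P.
pose Q := invmx P^T.
have Qu : Q \in unitmx by rewrite unitmx_inv unitmx_tr.
have H : invmx P *m diag_mx d *m P = invmx Q *m diag_mx d *m Q.
  by rewrite -AE -{1}Asym {1}AE !trmx_mul tr_diag_mx (trmx_inv P) /Q invmxK mulmxA.
have RmT : Rm^T = Rm.
  rewrite {2}/Rm (fc_unique f4 Pu Qu H) /Rm !trmx_mul tr_diag_mx /Q invmxK.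
  by rewrite (trmx_inv P) mulmxA.
exists (Rm *m Rm); split.
- by rewrite trmx_mul RmT.
- move=> v; rewrite mulmxA -[v^T *m Rm]trmxK trmx_mul trmxK RmT -mulmxA.
  by have := norm_ge0 (Rm *m v)^T; rewrite trmxK.
- rewrite /Rm !conj_mul // AE; congr (_ *m diag_mx _ *m _); apply/rowP => j.
  rewrite !mxE -!expr2 sqr_sqrtr ?sqrtr_ge0 // sqr_sqrtr //.
Qed.

End Real.

Section Eig.
Variable R : rcfType.

Lemma exists_nz n (u : 'rV[R[i]]_n) : u != 0 -> exists j, u 0 j != 0.
Proof.
move=> unz; apply/existsP; apply: contraNT unz; rewrite negb_exists => /forallP H.
by apply/eqP/rowP => i; rewrite mxE; apply/eqP; move: (H i); rewrite negbK.
Qed.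

Lemma eig_bound n (S : 'M[R]_n) : S^T = S ->
  (forall v : 'cV_n, 0 <= (v^T *m S *m v) 0 0) ->
  (forall v : 'cV_n, (v^T *m (S *m S) *m v) 0 0 <= (v^T *m v) 0 0) ->
  forall z : R[i], root (char_poly (map_mx (real_complex R) (1%:M - S))) z ->
  exists2 r : R, z = real_complex R r & 0 <= r <= 1.
Proof.
move=> Ssym Spsd Sle z.
have [Q Qu [e eQ]] := sym_diag Ssym.
have ebnd : forall j, 0 <= e 0 j <= 1.
  move=> j; set u := row j Q.
  have ue := row_eig j eQ.
  have N0 : 0 < (u *m u^T) 0 0 by rewrite norm_gt0 // unit_row_neq0.
  have e0 : 0 <= e 0 j.
    by have := Spsd u^T; rewrite cv_form (eig_form ue) pmulr_lge0.
  rewrite e0 /= -(@expr_le1 _ 2) //.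
  have ue2 : u *m (S *m S) = (e 0 j ^+ 2) *: u.
    by rewrite mulmxA ue -scalemxAl ue scalerA expr2.
  have := Sle u^T; rewrite cv_form (eig_form ue2) trmxK -{2}[(u *m u^T) 0 0]mul1r.
  by rewrite ler_pM2r.
rewrite -eigenvalue_root_char => /eigenvalueP [v vL vnz].
pose rc := real_complex R.
pose Qc := map_mx rc Q.
have Qcu : Qc \in unitmx by rewrite map_unitmx.
have eqc : Qc *m map_mx rc S = diag_mx (map_mx rc e) *m Qc.
  by rewrite -map_diag_mx -!map_mxM eQ.
pose w := v *m invmx Qc.
have vE : v = w *m Qc by rewrite /w mulmxKV.
have H2 : w - w *m diag_mx (map_mx rc e) = z *: w.
  have : (w - w *m diag_mx (map_mx rc e)) *m Qc = (z *: w) *m Qc.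
    rewrite mulmxBl -[w *m diag_mx _ *m Qc]mulmxA -eqc mulmxA -vE -scalemxAl -vE -vL.
    by rewrite map_mxB map_mx1 mulmxBr mulmx1.
  by move/(congr1 (mulmx^~ (invmx Qc))); rewrite !mulmxK.
have wnz : w != 0 by apply: contraNneq vnz => w0; rewrite vE w0 mul0mx.
clearbody w.
have [j wj] := exists_nz wnz.
exists (1 - e 0 j); last by have /andP [a b] := ebnd j; apply/andP; split; lra.
move/rowP: H2 => /(_ j); rewrite mul_mx_diag !mxE => H3.
rewrite rmorphB rmorph1; apply: (mulIf wj); rewrite -H3 mulrBl mul1r mulrC.
by [].
Qed.

Lemma fix_vec n (S : 'M[R]_n) (o : 'cV[R]_n) : S^T = S ->
  (forall v : 'cV_n, 0 <= (v^T *m S *m v) 0 0) ->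
  S *m S *m o = o -> S *m o = o.
Proof.
move=> Ssym Spsd SSo; pose w := S *m o - o.
have Hw : (S + 1%:M) *m w = 0.
  by rewrite /w mulmxDl mul1mx mulmxBr mulmxA SSo addrA subrK subrr.
have wE : S *m o = w + o by rewrite /w subrK.
clearbody w.
have : (w^T *m (S + 1%:M) *m w) 0 0 = 0 by rewrite -mulmxA Hw mulmx0 mxE.
rewrite mulmxDr mulmx1 mulmxDl mxE => /eqP.
rewrite paddr_eq0; last 2 first.
- exact: Spsd.
- by have := norm_ge0 w^T; rewrite trmxK.
move=> /andP [_ /eqP w0].
have w00 : w = 0.
  case: (eqVneq w 0) => // wnz; exfalso.
  have : w^T != 0 by apply: contra_neq wnz => H; rewrite -[w]trmxK H trmx0.
  by move/norm_gt0; rewrite trmxK w0 ltxx.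
by rewrite wE w00 add0r.
Qed.
End Eig.

From mathcomp Require Import ring.

Lemma wcs (R : realFieldType) n (a y : 'I_n -> R) :
  (forall i, 0 <= a i) -> 0 < \sum_i a i ->
  (\sum_i a i * y i) ^+ 2 / (\sum_i a i) <= \sum_i a i * y i ^+ 2.
Proof.
move=> a0 L0; set L := \sum_i a i; set s := \sum_i a i * y i.
pose m := s / L.
have e : \sum_i a i * (y i - m) ^+ 2 =
    \sum_i a i * y i ^+ 2 - (m *+ 2) * s + m ^+ 2 * L.
  rewrite (eq_bigr (fun i => a i * y i ^+ 2 - (m *+ 2) * (a i * y i) + m ^+ 2 * a i)).
    by rewrite big_split sumrB /= -!mulr_sumr.
  by move=> i _; ring.
have key : \sum_i a i * y i ^+ 2 - s ^+ 2 / L = \sum_i a i * (y i - m) ^+ 2.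
  by rewrite e /m; field; rewrite gt_eqF.
rewrite -subr_ge0 key.
by apply: sumr_ge0 => i _; apply: mulr_ge0 => //; apply: sqr_ge0.
Qed.

Lemma quadform (R : comPzRingType) s (w : 'cV[R]_s) (il : 'rV[R]_s) :
  (w^T *m diag_mx il *m w) 0 0 = \sum_j w j 0 ^+ 2 * il 0 j.
Proof.
rewrite mxE; apply: eq_bigr => j _; rewrite mul_mx_diag !mxE; ring.
Qed.

Section Spec.
Variables (R : realType) (n p s : nat).
Variables (x : 'I_n -> 'rV[R]_p) (c : 'I_s -> 'I_n) (k : 'rV[R]_p -> 'rV[R]_p -> R).
Hypothesis hk : forall a b, 0 <= k a b.
Hypothesis h1 : forall j, 0 < \sum_(q < n) k (x q) (ind x c j).
Hypothesis h2 : forall i, 0 < \sum_(q < s) (ncount x c q)%:R * k (x i) (ind x c q).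
Hypothesis hA : forall i, 0 < \sum_(l < s) Amx x c k i l.
Hypothesis hZ : forall j, 0 < \sum_(i < n) Zmx x c k i j.

Let Z := Zmx x c k.

Lemma A_ge0 i j : 0 <= Amx x c k i j.
Proof.
rewrite mxE; apply: divr_ge0; first by apply: mulr_ge0.
by apply: mulr_ge0; apply: ltW.
Qed.

Lemma Z_ge0 i j : 0 <= Z i j.
Proof. by rewrite /Z mxE; apply: divr_ge0; [apply: A_ge0 | apply: ltW]. Qed.

Lemma Z_row i : \sum_j Z i j = 1.
Proof.
rewrite /Z (eq_bigr (fun j => Amx x c k i j / \sum_(l < s) Amx x c k i l)).
  by rewrite -mulr_suml mulfV // gt_eqF.
by move=> j _; rewrite mxE.
Qed.

Let il : 'rV[R]_s := \row_j (\sum_i Z i j)^-1.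

Lemma invL : invmx (Lam x c k) = diag_mx il.
Proof.
have H : Lam x c k *m diag_mx il = 1%:M.
  rewrite /Lam mulmx_diag -diag_const_mx; congr diag_mx; apply/rowP => j.
  by rewrite !mxE mulfV // gt_eqF // hZ.
have [Lu _] := mulmx1_unit H.
by rewrite -[diag_mx il](mulKmx Lu) H mulmx1.
Qed.

Lemma M_sym : (Mmx x c k)^T = Mmx x c k.
Proof. by rewrite /Mmx invL !trmx_mul trmxK tr_diag_mx mulmxA. Qed.

Lemma M_form (v : 'cV[R]_n) :
  (v^T *m Mmx x c k *m v) 0 0 = \sum_j (Z^T *m v) j 0 ^+ 2 * il 0 j.
Proof.
rewrite -quadform /Mmx invL trmx_mul trmxK !mulmxA //.
Qed.

Lemma M_psd (v : 'cV[R]_n) : 0 <= (v^T *m Mmx x c k *m v) 0 0.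
Proof.
rewrite M_form; apply: sumr_ge0 => j _; apply: mulr_ge0; first exact: sqr_ge0.
by rewrite mxE invr_ge0 ltW.
Qed.

Lemma M_le (v : 'cV[R]_n) : (v^T *m Mmx x c k *m v) 0 0 <= (v^T *m v) 0 0.
Proof.
rewrite M_form.
apply: (le_trans (y := \sum_j \sum_i Z i j * v i 0 ^+ 2)).
  apply: ler_sum => j _.
  have H := wcs (fun i => v i 0) (fun i => Z_ge0 i j) (hZ j).
  apply: le_trans H; rewrite le_eqVlt; apply/orP; left; apply/eqP.
  rewrite /il [in LHS]mxE [X in _ * X]mxE; congr (_ ^+ 2 * _).
  by apply: eq_bigr => i _; rewrite mxE.
rewrite exchange_big mxE /=; apply: ler_sum => i _.
by rewrite -mulr_suml Z_row mul1r !mxE -expr2.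
Qed.

Lemma M_one : Mmx x c k *m (const_mx 1 : 'cV[R]_n) = const_mx 1.
Proof.
have e1 : Z^T *m (const_mx 1 : 'cV[R]_n) = \col_j (\sum_i Z i j).
  by apply/colP => j; rewrite !mxE; apply: eq_bigr => i _; rewrite !mxE mulr1.
have e2 : diag_mx il *m \col_j (\sum_i Z i j) = const_mx 1.
  by apply/colP => j; rewrite mul_diag_mx !mxE mulVf // gt_eqF // hZ.
have e3 : Z *m (const_mx 1 : 'cV[R]_s) = const_mx 1.
  by apply/colP => i; rewrite !mxE -[RHS](Z_row i); apply: eq_bigr => j _; rewrite [const_mx _ _ _]mxE mulr1.
by rewrite /Mmx invL -!mulmxA e1 e2 e3.
Qed.

End Spec.

Unset Implicit Arguments.

Theorem proposition1 (R : realType) (n p s : nat)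
  (x : 'I_n -> 'rV[R]_p) (c : 'I_s -> 'I_n) (k : 'rV[R]_p -> 'rV[R]_p -> R) :
  (0 < n)%N -> (0 < s)%N ->
  (forall a b, 0 <= k a b) ->
  (forall j, 0 < \sum_(q < n) k (x q) (ind x c j)) ->
  (forall i, 0 < \sum_(q < s) (ncount x c q)%:R * k (x i) (ind x c q)) ->
  (forall i, 0 < \sum_(l < s) Amx x c k i l) ->
  (forall j, 0 < \sum_(i < n) Zmx x c k i j) ->
  (exists S, psd_sqrt (Mmx x c k) S) /\
  (forall S : 'M[R]_n, psd_sqrt (Mmx x c k) S ->
     let L := 1%:M - S in
     (forall z : R[i], root (char_poly (map_mx (real_complex R) L)) z ->
        exists2 r : R, z = real_complex R r & 0 <= r <= 1) /\
     eigenvalue L 0).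
Proof.
move=> n0 s0 hk h1 h2 hA hZ; split.
  have [S [ST Spsd SS]] := sqrt_ex (M_sym hZ) (M_psd hZ).
  by exists S; split; [|split].
move=> S [ST [Spsd SS]] L; split.
  apply: eig_bound ST Spsd _ => v; rewrite SS; exact: M_le.
apply/eigenvalueP; exists (const_mx 1 : 'rV[R]_n); last first.
  apply/negP => /eqP/rowP/(_ (Ordinal n0)); rewrite !mxE => /eqP.
  by rewrite oner_eq0.
have S1 : S *m (const_mx 1 : 'cV[R]_n) = const_mx 1.
  by apply: fix_vec ST Spsd _; rewrite SS; exact: M_one.
rewrite scale0r /L mulmxBr mulmx1.
have -> : (const_mx 1 : 'rV[R]_n) *m S = const_mx 1.
  by rewrite -[LHS]trmxK trmx_mul ST trmx_const S1 trmx_const.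
by rewrite subrr.
Qed.
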